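(* Let $\Xi\subseteq\mathbb{R}^{n_\xi}$, let $q$ be a random vector in $\mathbb{R}^{n_q}$ with probability distribution $\mathsf{Pr}_q$ and support $\mathbb{Q}$, and let $F:\mathbb{R}^{n_q}\to\mathbb{R}^{p\times n_\xi}$ and $g:\mathbb{R}^{n_q}\to\mathbb{R}^{p}$ be continuous. For $\varepsilon\in(0,1)$ define the chance-constrained set $$\mathbb{X}_\varepsilon=\bigl\{\xi\in\Xi \;:\; \mathsf{Pr}_q\{F(q)\xi\le g(q)\}\ge 1-\varepsilon\bigr\}$$ (inequalities between vectors are componentwise). Let $x_c\in\mathbb{R}^{n_\xi}$ and $\underline{\mathbb{S}}\subseteq\mathbb{R}^{n_\xi}$ be given, and for $\gamma\ge 0$ let $\underline{\mathbb{S}}(\gamma)=x_c\oplus\gamma\underline{\mathbb{S}}=\{x_c+\gamma s: s\in\underline{\mathbb{S}}\}$. Assume $x_c\in\mathbb{X}_\varepsilon$. Let $\delta\in(0,1)$, choose an integer $N_\gamma\ge \frac{7.67}{\varepsilon}\ln\frac{1}{\delta}$ and set $r=\lceil \varepsilon N_\gamma/2\rceil$. Draw $N_\gamma$ i.i.d. samples $q^{(1)},\dots,q^{(N_\gamma)}$ from $\mathsf{Pr}_q$, and for each $i$ let $\mathbb{X}_i=\{\xi\in\Xi: F(q^{(i)})\xi\le g(q^{(i)})\}$ and $\gamma_i=\max\{\gamma : \underline{\mathbb{S}}(\gamma)\subseteq\mathbb{X}_i\}$. Let $\gamma$ be the $r$-th smallest value among $\gamma_1,\dots,\gamma_{N_\gamma}$.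 Then, with probability at least $1-\delta$ (with respect to the samples $q^{(1)},\dots,q^{(N_\gamma)}$), $\underline{\mathbb{S}}(\gamma)\subseteq\mathbb{X}_\varepsilon$.
   Context: This is the guarantee for the ''probabilistic scaling'' procedure (Algorithm 1 of the paper): a candidate set $\underline{\mathbb{S}}$ (a ''simple approximating set'') centered at $x_c$ is scaled around $x_c$ by the factor $\gamma$ computed from sampled constraints as described in the claim. *)

(* Defs.v *)
From HB Require Import structures.
From mathcomp Require Import all_boot all_order all_algebra.
From mathcomp Require Import all_classical all_reals all_analysis.
Set Implicit Arguments. Unset Strict Implicit. Unset Printing Implicit Defensive.
Import Order.TTheory GRing.Theory Num.Theory.
Import numFieldNormedType.Exports.
Local Open Scope classical_set_scope.
Local Open Scope ring_scope.

Definition borelRV (R : realType) (n : nat) := g_sigma_algebraType (@open 'rV[R]_n).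

Definition mxle (R : realType) (m n : nat) (A B : 'M[R]_(m, n)) : Prop :=
  forall i j, A i j <= B i j.

Definition Xq (R : realType) (nxi nq p : nat) (Xi : set 'cV[R]_nxi)
  (F : 'rV[R]_nq -> 'M[R]_(p, nxi)) (g : 'rV[R]_nq -> 'cV[R]_p)
  (q : 'rV[R]_nq) : set 'cV[R]_nxi :=
  [set xi | Xi xi /\ mxle (F q *m xi) (g q)].

Definition Xeps (R : realType) (nxi nq p : nat) (Xi : set 'cV[R]_nxi)
  (Prq : probability (borelRV R nq) R)
  (F : 'rV[R]_nq -> 'M[R]_(p, nxi)) (g : 'rV[R]_nq -> 'cV[R]_p)
  (eps : R) : set 'cV[R]_nxi :=
  [set xi | Xi xi /\
            ((1 - eps)%:E <= Prq [set q : borelRV R nq | mxle (F q *m xi) (g q)])%E].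

Definition Sgam (R : realType) (nxi : nat) (xc : 'cV[R]_nxi) (S : set 'cV[R]_nxi)
  (gam : R) : set 'cV[R]_nxi :=
  (fun s => xc + gam *: s) @` S.

Definition gamma_set (R : realType) (nxi nq p : nat) (Xi : set 'cV[R]_nxi)
  (F : 'rV[R]_nq -> 'M[R]_(p, nxi)) (g : 'rV[R]_nq -> 'cV[R]_p)
  (xc : 'cV[R]_nxi) (S : set 'cV[R]_nxi) (q : 'rV[R]_nq) : set R :=
  [set gam | 0 <= gam /\ Sgam xc S gam `<=` Xq Xi F g q].

(* gam = max { gamma >= 0 : S(gamma) subset X(q) }, with the convention
   gam = 0 when this set is empty. *)
Definition is_gamma_of (R : realType) (nxi nq p : nat) (Xi : set 'cV[R]_nxi)
  (F : 'rV[R]_nq -> 'M[R]_(p, nxi)) (g : 'rV[R]_nq -> 'cV[R]_p)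
  (xc : 'cV[R]_nxi) (S : set 'cV[R]_nxi) (q : 'rV[R]_nq) (gam : R) : Prop :=
  (gamma_set Xi F g xc S q = set0 /\ gam = 0) \/
  (gamma_set Xi F g xc S q gam /\
     forall gam', gamma_set Xi F g xc S q gam' -> gam' <= gam).

(* r-th smallest (r >= 1) value among gam_0, ..., gam_{N-1} *)
Definition rth_smallest (R : realType) (N : nat) (gam : 'I_N -> R) (r : nat) : R :=
  nth 0 (sort <=%R [seq gam i | i <- enum 'I_N]) r.-1.

Definition mutually_independent d (Omega : measurableType d) (R : realType)
  (P : probability Omega R) d' (V : measurableType d') (n : nat)
  (X : 'I_n -> Omega -> V) : Prop :=
  forall A : 'I_n -> set V, (forall i, measurable (A i)) ->
    P (\bigcap_(i in [set: 'I_n]) (X i @^-1` A i)) =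
    (\prod_(i < n) P (X i @^-1` A i))%E.

(* Main.v *)
Require Import Defs.
From HB Require Import structures.
From mathcomp Require Import all_boot all_order all_algebra.
From mathcomp Require Import all_classical all_reals all_analysis.
From mathcomp Require Import zify ring lra.
Import Order.TTheory GRing.Theory Num.Theory.
Import numFieldNormedType.Exports.
Local Open Scope classical_set_scope.
Local Open Scope ring_scope.
Set Implicit Arguments. Unset Strict Implicit. Unset Printing Implicit Defensive.
Lemma rth_props (R : realType) (N : nat) (gam : 'I_N -> R) r : (0 < r <= N)%N ->
  (exists j, rth_smallest gam r = gam j) /\
  leq (count (fun i => gam i < rth_smallest gam r) (enum 'I_N)) r.-1.
Proof.
move=> /andP[r0 rN].
set s := sort <=%R [seq gam i | i <- enum 'I_N].
have ss : size s = N by rewrite size_sort size_map size_enum_ord.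
have rs : (r.-1 < size s)%N by rewrite ss; case: r r0 rN.
rewrite /rth_smallest -/s; set x := nth 0 s r.-1.
split.
  have : x \in [seq gam i | i <- enum 'I_N] by rewrite -(mem_sort <=%R) mem_nth.
  by case/mapP => j _ ->; exists j.
have -> : count (fun i => gam i < x) (enum 'I_N) = count (fun y => y < x) s.
  rewrite -(count_map gam (fun y => y < x)); apply/permP.
  by rewrite perm_sym /s; apply/permPl; apply: perm_sort.
rewrite -(cat_take_drop r.-1 s) count_cat.
have -> : count (fun y => y < x) (drop r.-1 s) = 0%N.
  apply/eqP; rewrite -leqn0 leqNgt -has_count; apply/hasPn => y /(nthP 0) [k hk <-].
  rewrite nth_drop -leNgt; apply: (sorted_leq_nth le_trans lexx) => //.
  all: try (by apply: sort_sorted; exact: le_total).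
  - by rewrite size_drop ltn_subRL in hk.
  - exact: leq_addr.
rewrite addn0; apply: leq_trans (count_size _ _) _; rewrite size_take.
by rewrite rs.
Qed.
Lemma pow10_ge (R : realType) (e : R) : 1 + 147/2000 <= e -> 2 <= e ^+ 10.
Proof.
move=> e1.
have e0 : 0 <= e by apply: le_trans e1; lra.
have e2 : 115/100 <= e ^+ 2.
  apply: le_trans (_ : (1 + 147/2000) * (1 + 147/2000) <= _); first lra.
  by rewrite expr2; apply: (ler_pM _ _ e1 e1); lra.
have e4 : 132/100 <= e ^+ 4.
  apply: le_trans (_ : (115/100) * (115/100) <= _); first lra.
  by rewrite (_ : 4 = 2 + 2)%N // exprD; apply: (ler_pM _ _ e2 e2); lra.
have e8 : 174/100 <= e ^+ 8.
  apply: le_trans (_ : (132/100) * (132/100) <= _); first lra.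
  by rewrite (_ : 8 = 4 + 4)%N // exprD; apply: (ler_pM _ _ e4 e4); lra.
apply: le_trans (_ : (174/100) * (115/100) <= _); first lra.
by rewrite (_ : 10 = 8 + 2)%N // exprD; apply: (ler_pM _ _ e8 e2); lra.
Qed.

Lemma ln2_le (R : realType) : ln (2 : R) <= 147 / 200.
Proof.
have h : (2 : R) <= expR (147 / 200).
  have -> : (147 / 200 : R) = 10%:R * (147 / 2000) by lra.
  rewrite expRM_natl; apply: pow10_ge; exact: expR_ge1Dx.
rewrite -ler_expR lnK //; rewrite posrE; lra.
Qed.

Lemma binom_sum (R : realType) N (a b : R) :
  \sum_(f : {ffun 'I_N -> bool}) \prod_i (if f i then a else b) = (a + b) ^+ N.
Proof.
rewrite -(bigA_distr_bigA (fun (i : 'I_N) (j : bool) => if j then a else b)) /=.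
under eq_bigr do rewrite big_bool /=.
by rewrite prodr_const card_ord.
Qed.

Lemma prod_half (R : realType) N (f : {ffun 'I_N -> bool}) (p c : R) :
  \prod_i (if f i then p * c else 1 - p) =
  c ^+ #|[set i | f i]%SET| * \prod_i (if f i then p else 1 - p).
Proof.
have -> : \prod_i (if f i then p * c else 1 - p) =
          \prod_i ((if f i then c else 1) * (if f i then p else 1 - p)).
  by apply: eq_bigr => i _; case: (f i); rewrite ?mul1r // mulrC.
rewrite big_split /=; congr (_ * _).
rewrite -big_mkcond /= -prodr_const; apply: eq_bigl => i.
by rewrite inE.
Qed.

Lemma tail_bound (R : realType) N r (p eps delta : R) :
  0 < eps -> eps <= p -> p <= 1 -> 0 < delta -> delta < 1 ->
  767 / 100 / eps * ln (1 / delta) <= N%:R ->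
  (r.-1)%:R <= eps * N%:R / 2 ->
  \sum_(f : {ffun 'I_N -> bool} | (#|[set i | f i]%SET| < r)%N)
     \prod_i (if f i then p else 1 - p) <= delta.
Proof.
move=> e0 ep p1 d0 d1 HN Hr.
apply: (@le_trans _ _ (\sum_(f : {ffun 'I_N -> bool}) (2 ^+ r.-1 * \prod_(i < N) (if f i then p * (1/2) else 1 - p)))).
  rewrite [X in X <= _]big_mkcond /=; apply: ler_sum => f _.
  have hP : 0 <= \prod_i (if f i then p else 1 - p).
    by apply: prodr_ge0 => i _; case: (f i); lra.
  rewrite prod_half mulrA.
  case: ifP => hc; last by apply: mulr_ge0 => //; apply: mulr_ge0; apply: exprn_ge0; lra.
  rewrite -[X in X <= _]mul1r; apply: ler_wpM2r => //.
  have hc' : (#|[set i | f i]%SET| <= r.-1)%N by move: hc; case: (r) => // n; rewrite ltnS.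
  have -> : (2:R) ^+ r.-1 = 2 ^+ #|[set i | f i]%SET| * 2 ^+ (r.-1 - #|[set i | f i]%SET|).
    by rewrite -exprD subnKC.
  rewrite mulrAC -exprMn (_ : (2:R) * (1/2) = 1); last by lra.
  rewrite expr1n mul1r; apply: exprn_ege1; lra.
rewrite -mulr_sumr binom_sum.
set L := ln (1 / delta).
have L0 : 0 <= L by rewrite /L ln_ge0 // ler_pdivlMr // mul1r; lra.
have HX : 767 / 100 * L <= eps * N%:R.
  have -> : 767 / 100 * L = eps * (767 / 100 / eps * L).
    by field; rewrite gt_eqF.
  by rewrite ler_pM2l.
have Ld : ln delta = - L by rewrite /L div1r lnV ?opprK // posrE.
have l2 := ln2_le R.
have l20 : 0 <= ln (2 : R) by rewrite ln_ge0 //; lra.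
have H1 : (r.-1)%:R * ln 2 <= eps * N%:R / 2 * (147 / 200).
  by apply: ler_pM => //; rewrite ler0n.
have Hb : p * (1 / 2) + (1 - p) <= expR (- (eps / 2)).
  apply: le_trans (expR_ge1Dx _); lra.
apply: le_trans (_ : expR ((r.-1)%:R * ln 2) * expR (N%:R * - (eps / 2)) <= _).
  apply: ler_pM; first exact: exprn_ge0; first by apply: exprn_ge0; lra.
    by rewrite expRM_natl lnK // posrE.
  by rewrite expRM_natl; apply: lerXn2r => //; rewrite nnegrE ?expR_ge0 //; lra.
rewrite -expRD -[X in _ <= X]lnK ?posrE // ler_expR Ld.
lra.
Qed.
Lemma sum_cont (R : realType) (T : topologicalType) (I : finType) (h : I -> T -> R) :
  (forall k, continuous (h k)) -> continuous (fun q => \sum_k h k q).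
Proof.
move=> hc x.
elim: (index_enum I) => [|a s IH].
  have -> : (fun q => \sum_(k <- [::]) h k q) = fun _ => 0.
    by apply: funext => q; rewrite big_nil.
  exact: cst_continuous.
have -> : (fun q => \sum_(k <- a :: s) h k q) = (h a) + (fun q => \sum_(k <- s) h k q).
  by apply: funext => q; rewrite big_cons.
by apply: cvgD; [exact: hc|exact: IH].
Qed.

Lemma closed_meas (R : realType) n (A : set (borelRV R n)) :
  closed (A : set 'rV[R]_n) -> measurable A.
Proof.
move=> cA; rewrite -(setCK A); apply: measurableC.
by apply: sub_sigma_algebra; apply: closed_openC.
Qed.

Lemma closed_H (R : realType) nxi nq p (F : 'rV[R]_nq -> 'M[R]_(p, nxi))
  (g : 'rV[R]_nq -> 'cV[R]_p) (HF : continuous F) (Hg : continuous g) (xi : 'cV[R]_nxi) :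
  closed [set q | mxle (F q *m xi) (g q)].
Proof.
have -> : [set q | mxle (F q *m xi) (g q)] =
  \bigcap_(i in [set: 'I_p]) \bigcap_(j in [set: 'I_1])
     ((fun q => (F q *m xi) i j - g q i j) @^-1` [set x | x <= 0]).
  apply/seteqP; split => q /=.
    by move=> h i _ j _ /=; rewrite subr_le0; apply: h.
  by move=> h i j; rewrite -subr_le0; apply: (h i I j I).
apply: closed_bigI => i _; apply: closed_bigI => j _.
have cl : closed [set x : R | x <= 0] by exact: closed_le.
move: cl; apply: (continuous_closedP _).1.
have -> : (fun q => (F q *m xi) i j - g q i j) =
   (fun q => \sum_k (F q i k * xi k j)) - (fun q => g q i j).
  by apply: funext => z; rewrite mxE.
move=> q; apply: continuousB.
  apply: sum_cont => k {}q; apply: continuousM; last exact: cst_continuous.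
  exact: (continuous_comp (HF q) (@coord_continuous R _ _ i k (F q))).
exact: (continuous_comp (Hg q) (@coord_continuous R _ _ i j (g q))).
Qed.
Lemma cc (T : finType) (P : pred T) : #|[set i | P i]%SET| = count P (enum T).
Proof. rewrite cardsE cardE -size_filter. congr size. rewrite enumT. unfold enum_mem. by rewrite unlock. Qed.

Lemma entry_aff (R : realType) m n (M : 'M[R]_(m, n)) (xc s : 'cV[R]_n) (ga : R) i j :
  (M *m (xc + ga *: s)) i j = (M *m xc) i j + ga * (M *m s) i j.
Proof. by rewrite mulmxDr -scalemxAr !mxE. Qed.

Local Open Scope ereal_scope.
Lemma bigsetU_mem (T : Type) (I : finType) (P : pred I) (F : I -> set T) x :
  (\big[setU/set0]_(i | P i) F i) x <-> exists i, P i /\ F i x.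
Proof.
split.
  elim/big_ind: _ => //.
  - by move=> A B hA hB [/hA|/hB].
  - by move=> i Pi Fi; exists i.
by move=> [i [Pi Fi]]; rewrite (bigD1 i) //=; left.
Qed.

Definition cntf N (f : {ffun 'I_N -> bool}) := #|[set i | f i]%SET|.

Lemma prob_count (R : realType) d (Omega : measurableType d) (P : probability Omega R)
  d' (V : measurableType d') (Q : probability V R) N (X : 'I_N -> Omega -> V)
  (C : set V) (mC : measurable C) (mX : forall i, measurable_fun setT (X i))
  (dist : forall i A, measurable A -> P (X i @^-1` A) = Q A)
  (indep : mutually_independent P X) (r : nat) :
  let p := fine (Q C) in
  let E := [set w | (r <= #|[set i | `[< C (X i w) >] ]%SET|)%N] in
  measurable E /\
  P E = (\sum_(f : {ffun 'I_N -> bool} | (r <= cntf f)%N)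
           \prod_i (if f i then p else 1 - p)%R)%:E.
Proof.
move=> p E.
pose Ef (f : {ffun 'I_N -> bool}) :=
  \bigcap_(i in [set: 'I_N]) (X i @^-1` (if f i then C else ~` C)).
have mA : forall (b : bool), measurable (if b then C else ~` C).
  by move=> [] //; apply: measurableC.
have mEf : forall f, measurable (Ef f).
  move=> f; apply: fin_bigcap_measurable; first exact: finite_finset.
  move=> i _.
  by rewrite -[X in measurable X]setTI; apply: mX.
have hE : E = \big[setU/set0]_(f | (r <= cntf f)%N) Ef f.
  apply/seteqP; split => w.
    move=> hw; apply/bigsetU_mem; exists [ffun i => `[< C (X i w) >]].
    split.
      rewrite /cntf; move: hw; rewrite /E /=.
      congr (_ <= _)%N; apply: eq_card => i. by rewrite !inE ffunE.
    rewrite /Ef /bigcap /= => i _; rewrite ffunE; case: asboolP => //.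
  move=> /bigsetU_mem [f [hf hw]]; rewrite /E /=.
  suff -> : [set i | `[< C (X i w) >]]%SET = [set i | f i]%SET by [].
  apply/setP => i; rewrite !inE; have := hw i I; case: (f i) => /=.
    by move=> h; apply/asboolP.
  by move=> h; apply/asboolP.
have Qf : Q C = p%:E.
  rewrite /p fineK // ge0_fin_numE ?measure_ge0 //.
  by apply: le_lt_trans (probability_le1 _ mC) _; rewrite ltry.
have PEf : forall f, P (Ef f) = (\prod_i (if f i then p else 1 - p)%R)%:E.
  move=> f; rewrite /Ef indep; last by move=> i; apply: mA.
  rewrite -prodEFin; apply: eq_bigr => i _; rewrite dist //.
  by case: (f i); rewrite ?probability_setC // Qf.
split; first by rewrite hE; apply: bigsetU_measurable => f _.
have re : forall (T : Type) (idx : T) (op : Monoid.com_law idx) G,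
    \big[op/idx]_(f : {ffun 'I_N -> bool} | (r <= cntf f)%N) G f =
    \big[op/idx]_(f in predT | (r <= cntf f)%N) G f.
  by move=> T idx op G; apply: eq_bigl => f; rewrite inE.
rewrite hE re big_enum_val_cond measure_bigsetU_ord //.
- rewrite -sumEFin re big_enum_val_cond.
  by apply: eq_bigr => k _; exact: PEf.
- move=> k l _ _ [w [h1 h2]]; apply: enum_val_inj.
  suff : forall f, Ef f w -> f = [ffun i => `[< C (X i w) >]].
    by move=> h; rewrite (h _ h1) (h _ h2).
  move=> f hf; apply/ffunP => i; rewrite ffunE; have := hf i I.
  by case: (f i) => /= h; apply/esym; apply/asboolP.
Qed.

Lemma fin_prob (R : realType) d (T : measurableType d) (P : probability T R) (A : set T) :
  measurable A -> exists a : R, P A = a%:E /\ (0 <= a)%R /\ (a <= 1)%R.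
Proof.
move=> mA; have h1 := probability_le1 P mA; have h0 := measure_ge0 P A.
have fA : P A \is a fin_num.
  by rewrite ge0_fin_numE //; apply: le_lt_trans h1 _; rewrite ltry.
exists (fine (P A)); rewrite fineK //; split => //.
by split; rewrite -lee_fin fineK.
Qed.
Local Close Scope ereal_scope.

Unset Implicit Arguments.
Theorem lemma1 (R : realType) (nxi nq p : nat)
  (Xi : set 'cV[R]_nxi)
  (Prq : probability (borelRV R nq) R)
  (F : 'rV[R]_nq -> 'M[R]_(p, nxi)) (g : 'rV[R]_nq -> 'cV[R]_p)
  (HF : continuous F) (Hg : continuous g)
  (eps : R) (Heps0 : 0 < eps) (Heps1 : eps < 1)
  (xc : 'cV[R]_nxi) (S : set 'cV[R]_nxi) (HS0 : S 0)
  (Hxc : Xeps Xi Prq F g eps xc)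
  (delta : R) (Hdelta0 : 0 < delta) (Hdelta1 : delta < 1)
  (Ngam : nat) (HN : 767 / 100 / eps * ln (1 / delta) <= Ngam%:R)
  (d : measure_display) (Omega : measurableType d) (P : probability Omega R)
  (qs : 'I_Ngam -> Omega -> borelRV R nq)
  (Hqs_meas : forall i, measurable_fun [set: Omega] (qs i))
  (Hqs_dist : forall i (A : set (borelRV R nq)), measurable A ->
                 P (qs i @^-1` A) = Prq A)
  (Hqs_indep : mutually_independent P qs) :
  let r := `|Num.ceil (eps * Ngam%:R / 2)|%N in
  exists E : set Omega, measurable E /\ ((1 - delta)%:E <= P E)%E /\
    forall w, E w ->
      forall gam : 'I_Ngam -> R,
        (forall i, is_gamma_of Xi F g xc S (qs i w) (gam i)) ->
        Sgam xc S (rth_smallest gam r) `<=` Xeps Xi Prq F g eps.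
Proof.
move=> r.
pose H (xi : 'cV[R]_nxi) : set (borelRV R nq) := [set q | mxle (F q *m xi) (g q)].
have mH : forall xi, measurable (H xi) by move=> xi; apply: closed_meas; exact: closed_H.
pose A (ga : R) : set (borelRV R nq) := \bigcap_(s in S) H (xc + ga *: s).
have mA : forall ga, measurable (A ga).
  by move=> ga; apply: closed_meas; apply: closed_bigI => s _; exact: closed_H.
have Amono : forall g1 g2, 0 <= g1 -> g1 <= g2 -> A g2 `<=` A g1.
  move=> g1 g2 h1 h12 q hq s Ss i j.
  have h0 := hq 0 HS0 i j; have hs := hq s Ss i j.
  rewrite scaler0 addr0 in h0; rewrite entry_aff in hs; rewrite entry_aff.
  have gen : forall a b c : R, a <= c -> a + g2 * b <= c -> a + g1 * b <= c.
    move=> a b c ha hb; case: (leP 0 b) => b0.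
      have : g1 * b <= g2 * b by exact: ler_wpM2r.
      lra.
    have : g1 * b <= 0 by apply: mulr_ge0_le0 => //; exact: ltW.
    lra.
  exact: gen h0 hs.
set x := eps * Ngam%:R / 2.
have L0 : 0 < ln (1 / delta).
  apply: ln_gt0; rewrite ltr_pdivlMr; [rewrite mul1r; exact: Hdelta1 | exact: Hdelta0].
have N0 : 0 < (Ngam%:R : R).
  apply: lt_le_trans HN; apply: mulr_gt0; last exact: L0.
  apply: divr_gt0; [lra | exact: Heps0].
have x0 : 0 < x.
  rewrite /x; apply: divr_gt0; [exact: mulr_gt0 | lra].
have c0 : (0 <= Num.ceil x)%R by rewrite ceil_ge0; apply: lt_trans x0; rewrite ltrN10.
have hr : (r%:R : R) = (Num.ceil x)%:~R.
  by rewrite /r -[in RHS](gez0_abs c0).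
have r0 : (0 < r)%N by rewrite /r absz_gt0 gt_eqF // ceil_gt0.
have rN : (r <= Ngam)%N.
  have cN : (Num.ceil x <= Ngam%:Z)%R.
    rewrite ceil_le_int; change (x <= Ngam%:R).
    have := ler_piMl (ltW N0) (ltW Heps1); rewrite /x; lra.
  rewrite -(ler_nat R) hr; change ((Num.ceil x)%:~R <= (Ngam%:Z)%:~R :> R).
  by rewrite ler_int.
have rle : (r.-1)%:R <= x.
  have e : (r%:R : R) = (r.-1)%:R + 1 by rewrite natr1 prednK.
  have := ceilB1_lt x; rewrite intrB -hr; lra.
pose B := [set ga | 0 <= ga /\ (Prq (A ga) < (1 - eps)%:E)%E].
have Hdet : forall w, (forall ga, B ga -> (r <= #|[set i | `[< ~ A ga (qs i w) >] ]%SET|)%N) ->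
    forall gam, (forall i, is_gamma_of Xi F g xc S (qs i w) (gam i)) ->
    Sgam xc S (rth_smallest gam r) `<=` Xeps Xi Prq F g eps.
  move=> w Hc gam Hgam xi [s Ss <-].
  set gr := rth_smallest gam r.
  have rr : (0 < r <= Ngam)%N by rewrite r0 rN.
  have [[j gj] cnt] := rth_props gam rr.
  have gam0 : forall i, 0 <= gam i.
    by move=> i; case: (Hgam i) => [[_ ->]|[[h _] _]] //; exact: lexx.
  rewrite /Xeps /=; split.
    case: (Hgam j) => [[_ e]|[[_ hsub] _]].
      rewrite /gr gj e scale0r addr0; exact: Hxc.1.
    have : Xq Xi F g (qs j w) (xc + gr *: s) by apply: hsub; rewrite /gr gj; exists s.
    by case.
  have [gr0|grpos] : gr = 0 \/ 0 < gr.
    by rewrite /gr gj; have := gam0 j; rewrite le_eqVlt => /orP[/eqP <-|->]; [left|right].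
    rewrite gr0 scale0r addr0; exact: Hxc.2.
  have nB : ~ B gr.
    move=> Bgr; have := Hc gr Bgr; rewrite cc; apply/negP; rewrite -ltnNge.
    apply: (@leq_ltn_trans (count (fun i => gam i < gr) (enum 'I_Ngam))).
      apply: sub_count => i /asboolP nA; rewrite ltNge; apply/negP => hle; apply: nA.
      have gi0 : 0 < gam i by exact: lt_le_trans grpos hle.
      case: (Hgam i) => [[_ e]|[[_ hsub] _]]; first by rewrite e ltxx in gi0.
      apply: (Amono gr (gam i)) => //; first exact: ltW.
      move=> s' Ss'; have : Xq Xi F g (qs i w) (xc + gam i *: s').
        by apply: hsub; exists s'.
      by case.
    by apply: leq_ltn_trans cnt _; rewrite ltn_predL.
  have hA : ((1 - eps)%:E <= Prq (A gr))%E.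
    rewrite leNgt; apply/negP => h; apply: nB; split => //; exact: ltW.
  apply: le_trans hA _; apply: le_measure; rewrite ?inE; [exact: mA | exact: mH |].
  by move=> q hq; exact: hq s Ss.

have Bup : forall g1 g2, B g1 -> g1 <= g2 -> B g2.
  move=> g1 g2 [h0 h1] h12; split; first exact: le_trans h12.
  apply: le_lt_trans h1; apply: le_measure; rewrite ?inE; [exact: mA|exact: mA|].
  exact: Amono.
have tail : forall C : set (borelRV R nq), measurable C -> (eps%:E <= Prq C)%E ->
    (forall ga, B ga -> C `<=` ~` A ga) ->
  exists E : set Omega, measurable E /\ ((1 - delta)%:E <= P E)%E /\
    forall w, E w ->
      forall gam : 'I_Ngam -> R,
        (forall i, is_gamma_of Xi F g xc S (qs i w) (gam i)) ->
        Sgam xc S (rth_smallest gam r) `<=` Xeps Xi Prq F g eps.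
  move=> C mC pC subC.
  have := prob_count mC Hqs_meas Hqs_dist Hqs_indep r; move=> /= [mE PE].
  eexists; split; first exact: mE.
  split.
    rewrite PE lee_fin.
    have [a [Ca [a0 a1]]] := fin_prob Prq mC.
    have pa : fine (Prq C) = a by rewrite Ca.
    rewrite pa.
    have ea : eps <= a by rewrite -lee_fin -Ca.
    have tb := tail_bound Heps0 ea a1 Hdelta0 Hdelta1 HN rle.
    have bs := binom_sum Ngam a (1 - a).
    rewrite (bigID (fun f : {ffun 'I_Ngam -> bool} => (r <= cntf f)%N)) /= in bs.
    have e : (a + (1 - a)) ^+ Ngam = 1 by rewrite addrC subrK expr1n.
    rewrite e in bs.
    have : \sum_(f : {ffun 'I_Ngam -> bool} | ~~ (r <= cntf f)%N) \prod_(i < Ngam) (if f i then a else 1 - a) <= delta.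
      apply: le_trans _ tb; rewrite le_eqVlt; apply/orP; left; apply/eqP.
      by apply: eq_bigl => f; rewrite /cntf ltnNge.
    lra.
  move=> w Ew; apply: Hdet => ga Bga; apply: leq_trans Ew _.
  apply: subset_leq_card; apply/fintype.subsetP => i; rewrite !inE => hC.
  apply/asboolP.
  case: asboolP => // nn; exfalso; apply: nn; exact: (subC ga Bga (qs i w) hC).
have [Bne|B0] := pselect (B !=set0); last first.
  exists setT; split; first exact: measurableT.
  split; first by rewrite probability_setT lee_fin; lra.
  move=> w _; apply: Hdet => ga Bga; exfalso; apply: B0; exists ga; exact: Bga.
have lb : lbound B 0 by move=> y [].
have hinf : has_inf B by split => //; exists 0.
set gs := inf B.
have gs0 : 0 <= gs by apply: lb_le_inf.
have gsle : forall ga, B ga -> gs <= ga.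
  by move=> ga Bga; apply: ge_inf => //; exists 0.
have [gsB|gsnB] := pselect (B gs).
  apply: (tail (~` A gs)); first exact: measurableC.
    rewrite probability_setC //.
    have [a [Ea [a0 a1]]] := fin_prob Prq (mA gs).
    have := gsB.2; rewrite Ea lte_fin => h.
    rewrite -EFinB lee_fin; lra.
  move=> ga Bga q hq hA; apply: hq; exact: (Amono gs ga gs0 (gsle ga Bga) q hA).
pose gn (n : nat) := gs + n.+1%:R^-1.
have gn0 : forall n, 0 <= gn n.
  by move=> n; rewrite /gn; apply: addr_ge0 => //; rewrite invr_ge0 ler0n.
have gnB : forall n, B (gn n).
  move=> n.
  have hpos : 0 < n.+1%:R^-1 :> R by rewrite invr_gt0 ltr0n.
  have [b Bb hb] := inf_adherent hpos hinf.
  apply: Bup Bb _; exact: ltW.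
have mU : measurable (\bigcup_n A (gn n)) by apply: bigcupT_measurable => n; exact: mA.
apply: (tail (~` \bigcup_n A (gn n))); first exact: measurableC.
  have homo : {homo (fun n => A (gn n)) : n m / (n <= m)%N >-> (n <= m)%O}.
    move=> n m nm; apply/subsetPset; apply: Amono => //.
    rewrite /gn lerD2l lef_pV2 ?posrE ?ltr0n // ler_nat ltnS //.
  have cv := nondecreasing_cvg_mu (mu := Prq) (fun n => mA (gn n)) mU homo.
  have hle : (Prq (\bigcup_n A (gn n)) <= (1 - eps)%:E)%E.
    rewrite -(cvg_lim _ cv) //; apply: lime_le.
      by apply/cvg_ex; eexists; exact: cv.
    by apply: nearW => n /=; apply: ltW; exact: (gnB n).2.
  rewrite probability_setC //.
  have [a [Ea [a0 a1]]] := fin_prob Prq mU.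
  move: hle; rewrite Ea lee_fin => h.
  rewrite -EFinB lee_fin; lra.
move=> ga Bga q hq hA.
have gslt : gs < ga.
  rewrite lt_neqAle gsle // andbT; apply/eqP => e; apply: gsnB; rewrite e; exact: Bga.
have [k hk] := ltr_add_invr gslt.
apply: hq; exists k => //; apply: (Amono (gn k) ga) => //; exact: ltW.
Qed.
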